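(* Let $K$ be a field, $S=K[[x_1,\dots,x_n]]$ with maximal ideal $\mathfrak{m}$, let $E$ be the $S$-module described in the context, and fix a term order $\prec$ on $E$. Let $N\subset E$ be an $S$-submodule. If $0\neq\eta\in N:_E\mathfrak{m}$, then $\mathrm{LT}_\prec(\eta)\in \langle \mathrm{LT}_\prec(N)\rangle:_E\mathfrak{m}$; that is, for every $i=1,\dots,n$, either $x_i\,\mathrm{LT}_\prec(\eta)=0$ or $x_i\,\mathrm{LT}_\prec(\eta)\in\mathrm{LT}_\prec(N)$.
   Context: $E=K[x_1^{-1},\dots,x_n^{-1}]\cdot\frac{1}{x_1\cdots x_n}$ is the $K$-vector space with basis the ''terms'' $\frac{1}{x^{\alpha+1}}=\frac{1}{x_1^{\alpha_1+1}\cdots x_n^{\alpha_n+1}}$, $\alpha\in\mathbb{Z}_{\ge0}^n$, with $S$-module structure given by $x^{\gamma}\cdot\frac{1}{x^{\beta+1}}=\frac{1}{x^{\beta-\gamma+1}}$ if $\beta-\gamma\in\mathbb{Z}^n_{\ge0}$ and $0$ otherwise, extended bilinearly (this is the injective hull of $K$ as an $S$-module). A term order on $E$ is a total order $\prec$ on the set of terms such that (1) $\frac{1}{x^{1}}\preceq\frac{1}{x^{\alpha+1}}$ for all $\alpha$ (where $x^1=x_1\cdots x_n$), and (2) $\frac{1}{x^{\alpha+1}}\prec\frac{1}{x^{\beta+1}}$ implies $\frac{1}{x^{\alpha+\gamma+1}}\prec\frac{1}{x^{\beta+\gamma+1}}$ for all $\alpha,\beta,\gamma\in\mathbb{Z}^n_{\ge0}$.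 For $0\ne\eta\in E$, $\mathrm{LT}_\prec(\eta)$ is the $\prec$-largest term occurring in $\eta$ with nonzero coefficient. For a subset $N\subset E$, $\mathrm{LT}_\prec(N)=\{\mathrm{LT}_\prec(\eta)\mid 0\ne\eta\in N\}$, and $\langle\mathrm{LT}_\prec(N)\rangle$ is the $S$-submodule it generates. For an $S$-submodule $N\subset E$, $N:_E\mathfrak{m}=\{\eta\in E\mid \mathfrak{m}\eta\subset N\}$. *)

(* Defs.v *)
From HB Require Import structures.
From mathcomp Require Import all_boot all_order all_algebra.
From mathcomp Require Import mpoly.
Set Implicit Arguments. Unset Strict Implicit. Unset Printing Implicit Defensive.
Import GRing.Theory.
Local Open Scope ring_scope.

Notation mon n := 'X_{1..n}.

(* E = K[x^-1]/(x1...xn): the K-vector space with basis the terms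
   1/x^(alpha+1).  We encode it by {mpoly K[n]}: the term 1/x^(alpha+1)
   is represented by the monomial 'X_[alpha]; an element of E is a finite
   K-linear combination of terms.  (Only the K-vector-space structure of
   {mpoly K[n]} is used; its multiplication plays no role.) *)
Definition E (n : nat) (K : fieldType) := {mpoly K[n]}.
Definition term (n : nat) (K : fieldType) (a : mon n) : E n K := 'X_[a].

(* S = K[[x1,...,xn]]: a formal power series is its coefficient function. *)
Definition series (n : nat) (K : fieldType) := mon n -> K.

Definition xmon (n : nat) (K : fieldType) (g : mon n) : series n K :=
  fun h => (h == g)%:R.

(* S-module structure on E:  x^g . 1/x^(b+1) = 1/x^(b-g+1) if g <= b, 0
   otherwise, extended bilinearly.  For eta with finite support, the series
   f acts through the (finitely many) monomials g <= b of the support terms;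
   those all have degree <= mdeg b, so they are enumerated by 'X_{1..n < _}. *)
Definition sact (n : nat) (K : fieldType) (f : series n K) (eta : E n K)
  : E n K :=
  \sum_(b <- msupp eta)
     eta@_b *: \sum_(g : 'X_{1..n < (mdeg b).+1} | (bmnm g <= b)%MM)
                 f (bmnm g) *: term K (b - bmnm g)%MM.

Definition in_maxideal (n : nat) (K : fieldType) (f : series n K) : Prop :=
  f 0%MM = 0.

Definition is_submodule (n : nat) (K : fieldType) (N : E n K -> Prop) : Prop :=
  [/\ N 0,
      (forall u v, N u -> N v -> N (u + v)) &
      (forall (f : series n K) u, N u -> N (sact f u))].

Definition colon (n : nat) (K : fieldType) (N : E n K -> Prop) (eta : E n K)
  : Prop :=
  forall f : series n K, in_maxideal f -> N (sact f eta).

Definition gen (n : nat) (K : fieldType) (A : E n K -> Prop) (eta : E n K)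
  : Prop :=
  forall N : E n K -> Prop, is_submodule N -> (forall u, A u -> N u) -> N eta.

(* A term order on E, given as the strict relation lt on exponents:
   lt a b  means  1/x^(a+1) < 1/x^(b+1). *)
Definition is_term_order (n : nat) (lt : rel (mon n)) : Prop :=
  [/\ irreflexive lt,
      transitive lt,
      (forall a b, a != b -> lt a b || lt b a),
      (forall a, (a == 0%MM) || lt 0%MM a) &
      (forall a b g, lt a b -> lt (a + g)%MM (b + g)%MM)].

(* Exponent of the lt-largest term occurring in eta (meaningful for eta != 0;
   0 is the minimum of any term order, so it is a correct starting value). *)
Definition LTexp (n : nat) (K : fieldType) (lt : rel (mon n)) (eta : E n K)
  : mon n :=
  foldr (fun a b => if lt b a then a else b) 0%MM (msupp eta).

Definition LT (n : nat) (K : fieldType) (lt : rel (mon n)) (eta : E n K)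
  : E n K := term K (LTexp lt eta).

Definition LTset (n : nat) (K : fieldType) (lt : rel (mon n))
  (N : E n K -> Prop) (u : E n K) : Prop :=
  exists eta, [/\ N eta, eta != 0 & u = LT lt eta].

(* Main.v *)
Require Import Defs.
From mathcomp Require Import all_boot all_order all_algebra.
From mathcomp Require Import mpoly.
Import GRing.Theory.
Local Open Scope ring_scope.

Lemma foldr_spec (n : nat) (lt : rel 'X_{1..n}) (s : seq 'X_{1..n}) :
  is_term_order lt ->
  let r := foldr (fun a b => if lt b a then a else b) 0%MM s in
  (r \in s \/ r = 0%MM) /\ (forall b, b \in s -> b = r \/ lt b r).
Proof.
case=> Hirr Htr Htot H0 Hadd /=.
elim: s => [|x s [IH1 IH2]] /=; first by split; [right|].
set r := foldr _ _ s in IH1 IH2 *.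
case: ifP => Hrx.
  split; first by left; rewrite inE eqxx.
  move=> b; rewrite inE => /orP[/eqP->|bs]; first by left.
  by case: (IH2 b bs) => [->|H]; right => //; apply: Htr Hrx.
split.
  by case: IH1 => [H|H]; [left; rewrite inE H orbT|right].
move=> b; rewrite inE => /orP[/eqP->|bs]; last exact: IH2.
case: (eqVneq x r) => [->|ne]; first by left.
by move: (Htot _ _ ne); rewrite Hrx orbF; right.
Qed.

Arguments foldr_spec {n lt s}.
Lemma LTexp_spec (n : nat) (K : fieldType) (lt : rel 'X_{1..n}) (eta : E n K) :
  is_term_order lt -> eta != 0 ->
  LTexp lt eta \in msupp eta /\
  (forall b, b \in msupp eta -> b = LTexp lt eta \/ lt b (LTexp lt eta)).
Proof.
move=> Ho ne; have [[H1|H1] H2] := foldr_spec (s := msupp eta) Ho;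
  rewrite /LTexp; split => //.
case: Ho => Hirr Htr Htot H0 Hadd.
have: msupp eta != [::].
  apply/eqP => e; move/eqP: ne; apply; rewrite (mpolyE eta) e.
  by rewrite big_nil.
case E1: (msupp eta) => [|c s] // _.
have cs : c \in msupp eta by rewrite E1 inE eqxx.
rewrite -E1 H1.
move: (H2 c cs); rewrite H1 => [[<-|]] //.
move=> lc0; move: (H0 c); case: eqP => [e|_] /=.
  by move: lc0; rewrite e Hirr.
by move=> l0c; move: (Htr _ _ _ l0c lc0); rewrite Hirr.
Qed.

Arguments LTexp_spec {n K lt eta}.
Lemma LTexp_eq (n : nat) (K : fieldType) (lt : rel 'X_{1..n}) (eta : E n K) r :
  is_term_order lt -> r \in msupp eta ->
  (forall b, b \in msupp eta -> b = r \/ lt b r) ->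
  LTexp lt eta = r.
Proof.
move=> Ho rs Hb.
have ne : eta != 0.
  apply/eqP => e; move: rs; rewrite e.
  by rewrite (mcoeff_msupp (0 : {mpoly K[n]})) mcoeff0 eqxx.
have [Hs Hs2] := LTexp_spec Ho ne.
case: Ho => Hirr Htr Htot H0 Hadd.
case: (Hb _ Hs) => [//|l1]; case: (Hs2 _ rs) => [e|l2]; first by rewrite e.
by move: (Htr _ _ _ l1 l2); rewrite Hirr.
Qed.

Arguments LTexp_eq {n K lt eta r}.
Lemma mdeg_lem (n : nat) (g b : 'X_{1..n}) : (g <= b)%MM -> (mdeg g < (mdeg b).+1)%N.
Proof.
move=> gb; rewrite ltnS -(submK gb) mdegD; exact: leq_addl.
Qed.

Arguments mdeg_lem {n g b}.
Lemma sact_mon (n : nat) (K : fieldType) (f : series n K) (c : K) (g : 'X_{1..n})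
  (eta : E n K) :
  (forall h, f h = c * (h == g)%:R) ->
  sact f eta = c *: \sum_(b <- msupp eta | (g <= b)%MM) eta@_b *: 'X_[b - g].
Proof.
move=> Hf; rewrite /sact scaler_sumr [RHS]big_mkcond /=; apply: eq_bigr => b _.
case: ifP => gb.
  have Hd := mdeg_lem gb.
  rewrite (bigD1 (BMultinom Hd)) //= big1 => [|g' /andP[_ ne]].
    by rewrite Hf eqxx mulr1 addr0 /term scalerA scalerA mulrC.
  rewrite Hf; case: eqP => [e|_]; last by rewrite mulr0 scale0r.
  by move: ne; rewrite bmeqP /= e eqxx.
rewrite big1 ?scaler0 // => g' Hg'; rewrite Hf; case: eqP => [e|_].
  by move: Hg'; rewrite e gb.
by rewrite mulr0 scale0r.
Qed.

Lemma coef_sum (n : nat) (K : fieldType) (g c : 'X_{1..n}) (eta : E n K) :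
  (\sum_(b <- msupp eta | (g <= b)%MM) eta@_b *: 'X_[b - g])@_c =
  \sum_(b <- msupp eta | (g <= b)%MM) eta@_b * ((b - g)%MM == c)%:R.
Proof.
rewrite raddf_sum; apply: eq_bigr => b _.
by rewrite /= mcoeffZ mcoeffX.
Qed.

Arguments sact_mon {n K f c g eta}.
Arguments coef_sum {n K g c eta}.
Lemma key (n : nat) (K : fieldType) (lt : rel 'X_{1..n}) (eta : E n K) g :
  is_term_order lt -> eta != 0 -> (g <= LTexp lt eta)%MM ->
  let z := sact (xmon K g) eta in
  z@_(LTexp lt eta - g)%MM = eta@_(LTexp lt eta) /\
  LTexp lt z = (LTexp lt eta - g)%MM /\ z != 0.
Proof.
move=> Ho ne ga /=; set a := LTexp lt eta.
have [as_ Ha] := LTexp_spec Ho ne.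
have Hz : sact (xmon K g) eta =
   1 *: \sum_(b <- msupp eta | (g <= b)%MM) eta@_b *: 'X_[b - g].
  by apply: sact_mon => h; rewrite mul1r.
rewrite scale1r in Hz.
have Hc : (sact (xmon K g) eta)@_(a - g)%MM = eta@_a.
  rewrite Hz coef_sum big_mkcond (bigD1_seq a) ?msupp_uniq //= ga eqxx mulr1.
  rewrite big1 ?addr0 // => b ba; case: ifP => gb //.
  case: eqP => [e|_]; last by rewrite mulr0.
  by move: ba; rewrite -(submK gb) e submK // eqxx.
have nz : sact (xmon K g) eta != 0.
  apply/eqP => e; move: as_; rewrite mcoeff_msupp => /eqP; apply.
  by rewrite -Hc e mcoeff0.
split => //; split => //.
case: (Ho) => Hirr Htr Htot H0 Hadd.
apply: LTexp_eq => //; first by rewrite mcoeff_msupp Hc -mcoeff_msupp.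
move=> c; rewrite mcoeff_msupp; case: (boolP ((c == a - g)%MM || lt c (a - g)%MM)).
  by case/orP => [/eqP->|]; [left|right].
rewrite negb_or => /andP[nc nl]; rewrite Hz coef_sum big1_seq ?eqxx //.
move=> b /andP[gb bs]; case: eqP => [e|_]; last by rewrite mulr0.
exfalso; case: (Ha _ bs) => [eb|lba].
  by move: nc; rewrite -e eb eqxx.
case: (eqVneq (b - g)%MM (a - g)%MM) => [e2|ne2].
  by move: nc; rewrite -e e2 eqxx.
move: (Htot _ _ ne2) => /orP[l|l]; first by move: nl; rewrite -e l.
move: (Hadd _ _ g l); rewrite !submK // => lab.
by move: (Htr _ _ _ lab lba); rewrite Hirr.
Qed.

Arguments key {n K lt eta g}.
Lemma lem0 (n : nat) (m : 'X_{1..n}) : (0 <= m)%MM.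
Proof. by have := lem_addl m 0%MM; rewrite addm0. Qed.

Theorem lemma3p5 (n : nat) (K : fieldType) (lt : rel 'X_{1..n})
  (N : E n K -> Prop) (eta : E n K) :
  is_term_order lt ->
  is_submodule N ->
  eta != 0 ->
  colon N eta ->
  colon (gen (LTset lt N)) (LT lt eta) /\
  (forall i : 'I_n,
     sact (xmon K (mnm1 i)) (LT lt eta) = 0 \/
     LTset lt N (sact (xmon K (mnm1 i)) (LT lt eta))).
Proof.
move=> Ho HN ne Hcol.
set a := LTexp lt eta.
have inLT : forall g, (g <= a)%MM -> g != 0%MM -> LTset lt N 'X_[a - g].
  move=> g ga g0; have [_ [HL nz]] := key Ho ne ga.
  exists (sact (xmon K g) eta); split => //.
    apply: Hcol; rewrite /in_maxideal /xmon eq_sym.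
    by move/negbTE: g0 => ->.
  by rewrite /LT HL.
split.
  move=> f f0; rewrite /LT /sact -/a msuppX big_seq1 mcoeffX eqxx scale1r.
  apply: (big_ind (gen (LTset lt N))).
  - by move=> N' [H0 _ _].
  - by move=> u v Hu Hv N' HN' Hsub; case: (HN') => _ Hadd _; apply: Hadd;
      [apply: Hu|apply: Hv].
  move=> g' Hg'; case: (eqVneq (bmnm g') 0%MM) => [e|ne'].
    by rewrite e f0 scale0r => N' [H0 _ _].
  move=> N' HN' Hsub.
  have -> : f (bmnm g') *: term K (a - bmnm g') =
     sact (fun h => f (bmnm g') * (h == 0%MM)%:R) 'X_[a - bmnm g'].
    rewrite (sact_mon (c := f (bmnm g')) (g := 0%MM)) // msuppX.
    by rewrite big_cons big_nil lem0 addr0 mcoeffX eqxx scale1r subm0.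
  case: HN' => _ _ Hs; apply: Hs; apply: Hsub; exact: inLT.
move=> i; rewrite /LT /term -/a.
rewrite (sact_mon (c := 1) (g := mnm1 i)); last by move=> h; rewrite mul1r.
rewrite msuppX big_cons big_nil mcoeffX eqxx scale1r.
case: ifP => ga; last by left.
right; rewrite ?addr0 ?scale1r; apply: inLT => //; by rewrite mnm1_eq0.
Qed.
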